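(* Let $n\geq 2$ and $k\in\{0,1,\ldots,n\}$ be integers. For $x\in[0,1]$ let $c(x)=-\min\{x,1-x\}/(n-1)$ and $$p_{n,k}(x)=\binom{n}{k}\frac{x^{(k,c(x))}\,(1-x)^{(n-k,c(x))}}{1^{(n,c(x))}}.$$ Then $p_{n,k}$ is increasing on $[0,x^*_{n,k}]$ and decreasing on $[x^*_{n,k},1]$, where $$x^*_{n,k}=\begin{cases} x_{n,k}, & \text{if } k\leq \frac{n-1}{2},\\ \frac12, & \text{if } \frac{n-1}{2}<k<\frac{n+1}{2},\\ 1-x_{n,n-k}, & \text{if } k\geq\frac{n+1}{2},\end{cases}$$ and the numbers $x_{n,j}\in\left[\frac{j-1}{n-1},\frac{j}{n-1}\right]$, $j\in\{0,\ldots,n-1\}$, are as defined in the context.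
   Context: For real $y$ and $h$, the rising factorial with increment $h$ is $y^{(0,h)}=1$ and $y^{(m,h)}=y(y+h)\cdots(y+(m-1)h)$ for integers $m\geq1$. The quantity $p_{n,k}(x)$ is the probability that $k$ white balls are drawn in $n$ draws from a Pólya urn initially containing $x$ white and $1-x$ black ''balls'', where after each draw the drawn ball is returned together with $c(x)$ balls of the same colour. For integers $n\geq 2$ and $j\in\{0,\ldots,n-1\}$, let $$\varphi_{n,j}(x)=\sum_{i=0}^{n-1}\frac{1}{1-\frac{i}{n-1}x}-\sum_{i=0}^{n-j-1}\frac{1}{1-x-\frac{i}{n-1}x},\qquad x\in\left[0,\tfrac{n-1}{2n-j-2}\right),$$ and let $x_{n,j}$ be the (unique) number in $\left[\frac{j-1}{n-1},\frac{j}{n-1}\right]$ such that $\varphi_{n,j}$ is positive on $[0,x_{n,j})$ and negative on $\left(x_{n,j},\frac{n-1}{2n-j-2}\right)$; such a number exists. *)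

(* Defs.v *)
From HB Require Import structures.
From mathcomp Require Import all_boot all_order all_algebra.
From mathcomp Require Import boolp classical_sets reals.
Set Implicit Arguments. Unset Strict Implicit. Unset Printing Implicit Defensive.
Import Order.TTheory GRing.Theory Num.Theory.
Local Open Scope ring_scope.

Definition rising (R : pzRingType) (y h : R) (m : nat) : R :=
  \prod_(i < m) (y + i%:R * h).

Definition cpol (R : realType) (n : nat) (x : R) : R :=
  - Num.min x (1 - x) / (n%:R - 1).

Definition pnk (R : realType) (n k : nat) (x : R) : R :=
  'C(n, k)%:R * rising x (cpol n x) k * rising (1 - x) (cpol n x) (n - k)
    / rising 1 (cpol n x) n.

Definition phi (R : realType) (n j : nat) (x : R) : R :=
  \sum_(i < n) (1 - i%:R / (n%:R - 1) * x)^-1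
  - \sum_(i < n - j) (1 - x - i%:R / (n%:R - 1) * x)^-1.

(* right end of the domain of phi_{n,j}: (n-1)/(2n-j-2) *)
Definition phi_bound (R : realType) (n j : nat) : R :=
  (n%:R - 1) / (2 * n%:R - j%:R - 2).

Definition is_xnj (R : realType) (n j : nat) (x : R) : Prop :=
  [/\ (j%:R - 1) / (n%:R - 1) <= x <= j%:R / (n%:R - 1),
      (forall y : R, 0 <= y -> y < x -> 0 < phi n j y) &
      (forall y : R, 0 <= y -> x < y -> y < phi_bound R n j -> phi n j y < 0)].

Definition xnj (R : realType) (n j : nat) : R := xget 0 [set x | is_xnj n j x].

Definition xstar (R : realType) (n k : nat) : R :=
  if k%:R <= (n%:R - 1) / 2 :> R then xnj R n k
  else if k%:R < (n%:R + 1) / 2 :> R then 1 / 2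
  else 1 - xnj R n (n - k).

(* Main.v *)
Require Import Defs.
From HB Require Import structures.
From mathcomp Require Import all_boot all_order all_algebra.
From mathcomp Require Import boolp classical_sets functions reals.
From mathcomp Require Import topology normedtype derive realfun exp.
From mathcomp Require Import ring lra zify.
Import Order.TTheory GRing.Theory Num.Theory.
Import numFieldNormedType.Exports.
Local Open Scope ring_scope.
Local Open Scope classical_set_scope.

Section S.
Variable R : realType.
Lemma is_derive_aff (a b x : R) : is_derive x 1 (fun y => a + b * y) b.
Proof.
have h : is_derive x 1 (cst a + b \*: id) (0 + b *: (1:R)) by typeclasses eauto.
rewrite add0r /GRing.scale /= mulr1 in h.
exact h.
Qed.

Lemma is_deriveV' (f : R -> R) (x df : R) : f x != 0 -> is_derive x 1 f df ->
  is_derive x 1 (fun y => (f y)^-1) (- (f x)^-2 * df).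
Proof.
move=> fx0 hd; apply: DeriveDef; first exact: derivableV.
by rewrite deriveV // derive_val.
Qed.

Lemma up_of_deriv (f df : R -> R) (a b : R) :
  (forall x, a < x < b -> is_derive x 1 f (df x)) ->
  (forall x, a < x < b -> 0 <= df x) ->
  (forall x, a <= x <= b -> derivable f x 1) ->
  forall x y, a <= x -> x <= y -> y <= b -> f x <= f y.
Proof.
move=> hd hpos hder x y ax xy yb.
apply: (@ger0_derive1_ndecr R f a b) => //.
- move=> z; rewrite in_itv /= => /hd h; exact: ex_derive.
- move=> z; rewrite in_itv /= => hz; rewrite derive1E.
  have h := hd z hz; rewrite derive_val; exact: hpos.
- apply: derivable_within_continuous => z; rewrite in_itv /=; exact: hder.
Qed.

Lemma down_of_deriv (f df : R -> R) (a b : R) :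
  (forall x, a < x < b -> is_derive x 1 f (df x)) ->
  (forall x, a < x < b -> df x <= 0) ->
  (forall x, a <= x <= b -> derivable f x 1) ->
  forall x y, a <= x -> x <= y -> y <= b -> f y <= f x.
Proof.
move=> hd hpos hder x y ax xy yb.
apply: (@ler0_derive1_nincr R f a b) => //.
- move=> z; rewrite in_itv /= => /hd h; exact: ex_derive.
- move=> z; rewrite in_itv /= => hz; rewrite derive1E.
  have h := hd z hz; rewrite derive_val; exact: hpos.
- apply: derivable_within_continuous => z; rewrite in_itv /=; exact: hder.
Qed.

Lemma is_deriveD' (f g : R -> R) (x df dg : R) : is_derive x 1 f df -> is_derive x 1 g dg ->
  is_derive x 1 (fun y => f y + g y) (df + dg).
Proof. move=> h1 h2; exact: is_deriveD. Qed.

Lemma is_deriveZ' (f : R -> R) (k x df : R) : is_derive x 1 f df ->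
  is_derive x 1 (fun y => k * f y) (k * df).
Proof. move=> h1; have := @is_deriveZ R R R f k x 1 df h1; by []. Qed.

Lemma is_derive_inv_aff (a b x : R) : a + b * x != 0 ->
  is_derive x 1 (fun y => (a + b * y)^-1) (- (a + b * x)^-2 * b).
Proof. move=> h; exact: (@is_deriveV' (fun y => a + b * y) x b h (is_derive_aff a b x)). Qed.

Lemma ln_lower (r : R) : 1 <= r -> 2 * (r - 1) / (r + 1) <= ln r.
Proof.
move=> r1.
pose F := fun t : R => ln t + 4 * (1 + 1 * t)^-1.
pose dF := fun t : R => t^-1 + 4 * (- (1 + 1 * t)^-2 * 1).
have hd : forall t : R, 0 < t -> is_derive t 1 F (dF t).
  move=> t t0; apply: is_deriveD'; first exact: is_derive1_ln.
  apply: is_deriveZ'; apply: is_derive_inv_aff; rewrite mul1r; apply/lt0r_neq0; lra.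
have h : F 1 <= F r.
  apply: (@up_of_deriv F dF 1 r _ _ _ 1 r (lexx _) r1 (lexx _)).
  - move=> t /andP[t1 _]; apply: hd; lra.
  - move=> t /andP[t1 _].
    have -> : dF t = (t - 1)^+2 / (t * (1 + t)^+2).
      rewrite /dF ?mul1r ?mulr1; field; apply/andP; split; apply/lt0r_neq0; lra.
    apply: divr_ge0; first exact: sqr_ge0.
    apply: mulr_ge0; [lra | exact: sqr_ge0].
  - move=> t /andP[t1 _]; apply: ex_derive; apply: hd; lra.
move: h; rewrite /F ln1 ?mul1r => h.
have e : 2 * (r - 1) / (r + 1) = 2 - 4 * (1 + r)^-1.
  field; apply/lt0r_neq0; lra.
have e2 : 4 * (1 + 1)^-1 = (2:R) by field.
rewrite e; rewrite e2 in h; lra.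
Qed.

Lemma ln_upper (r : R) : 1 <= r -> ln r <= (r - r^-1) / 2.
Proof.
move=> r1.
pose F := fun t : R => 2^-1 * (0 + 1 * t) + (- 2^-1) * (0 + 1 * t)^-1 + (- 1) * ln t.
pose dF := fun t : R => 2^-1 * 1 + (- 2^-1) * (- (0 + 1 * t)^-2 * 1) + (-1) * t^-1.
have hd : forall t : R, 0 < t -> is_derive t 1 F (dF t).
  move=> t t0; apply: is_deriveD'; last by apply: is_deriveZ'; exact: is_derive1_ln.
  apply: is_deriveD'; first by apply: is_deriveZ'; exact: is_derive_aff.
  apply: is_deriveZ'; apply: is_derive_inv_aff; rewrite add0r mul1r; apply/lt0r_neq0; lra.
have h : F 1 <= F r.
  apply: (@up_of_deriv F dF 1 r _ _ _ 1 r (lexx _) r1 (lexx _)).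
  - move=> t /andP[t1 _]; apply: hd; lra.
  - move=> t /andP[t1 _].
    have -> : dF t = (t - 1)^+2 / (2 * t^+2).
      rewrite /dF ?add0r ?mul1r ?mulr1; field; apply/lt0r_neq0; lra.
    apply: divr_ge0; first exact: sqr_ge0.
    apply: mulr_ge0; [lra | exact: sqr_ge0].
  - move=> t /andP[t1 _]; apply: ex_derive; apply: hd; lra.
move: h; rewrite /F ln1 ?add0r ?mul1r invr1 mulr0 addr0 => h.
have e : (r - r^-1) / 2 = 2^-1 * r + - 2^-1 * r^-1 by ring.
rewrite e; lra.
Qed.
End S.

Ltac neq0 := match goal with |- is_true (_ != 0) => first [apply/lt0r_neq0; lra | apply/ltr0_neq0; lra | apply/lt0r_neq0; nra | apply/ltr0_neq0; nra] end.
Ltac nzs := repeat (apply/andP; split); neq0.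

Section S2.
Variable R : realType.

Lemma ln_mid (y h : R) : 0 < h -> h < y -> 2 * h / y <= ln (y + h) - ln (y - h).
Proof.
move=> h0 hy.
have p1 : 0 < y - h by lra.
have p2 : 0 < y + h by lra.
have r1 : 1 <= (y + h) / (y - h) by rewrite ler_pdivlMr //; lra.
have := @ln_lower R ((y + h) / (y - h)) r1.
rewrite ln_div ?posrE //.
have -> : 2 * ((y + h) / (y - h) - 1) / ((y + h) / (y - h) + 1) = 2 * h / y.
  field; nzs.
by [].
Qed.

Lemma ln_trap (a b : R) : 0 < b -> b <= a -> ln a - ln b <= (a - b) * (a^-1 + b^-1) / 2.
Proof.
move=> b0 ba.
have a0 : 0 < a by lra.
have r1 : 1 <= a / b by rewrite ler_pdivlMr //; lra.
have := @ln_upper R (a / b) r1.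
rewrite ln_div ?posrE //.
have -> : (a / b - (a / b)^-1) / 2 = (a - b) * (a^-1 + b^-1) / 2.
  field; nzs.
by [].
Qed.

Lemma sum_mid (s c : R) (N : nat) : 0 < s -> 0 < 1 - (c + N%:R - 2^-1) * s ->
  s * \sum_(i < N) (1 - (c + i%:R) * s)^-1 <=
  ln (1 - (c - 2^-1) * s) - ln (1 - (c + N%:R - 2^-1) * s).
Proof.
move=> s0; elim: N => [|N IH] hN.
  by rewrite big_ord0 mulr0 addr0 subrr.
rewrite big_ord_recr /= mulrDr.
have hN' : 0 < 1 - (c + N%:R - 2^-1) * s.
  move: hN; rewrite -natr1; nra.
have := IH hN'.
have hy : 0 < 1 - (c + N%:R) * s - s / 2 by move: hN; rewrite -natr1; nra.
have := @ln_mid (1 - (c + N%:R) * s) (s / 2) ltac:(lra) ltac:(lra).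
have -> : 1 - (c + N%:R) * s + s / 2 = 1 - (c + N%:R - 2^-1) * s by field.
have -> : 1 - (c + N%:R) * s - s / 2 = 1 - (c + N.+1%:R - 2^-1) * s by rewrite -natr1; field.
have -> : 2 * (s / 2) / (1 - (c + N%:R) * s) = s * (1 - (c + N%:R) * s)^-1 by field; nzs.
move=> a b; lra.
Qed.

Lemma sum_trap (s c : R) (N : nat) : 0 < s -> 0 < 1 - (c + N%:R) * s ->
  ln (1 - c * s) - ln (1 - (c + N%:R) * s)
   + s / 2 * ((1 - c * s)^-1 + (1 - (c + N%:R) * s)^-1)
  <= s * \sum_(i < N.+1) (1 - (c + i%:R) * s)^-1.
Proof.
move=> s0; elim: N => [|N IH] hN.
  rewrite big_ord1 /= addr0 subrr add0r; rewrite le_eqVlt; apply/orP; left; apply/eqP; field; nzs.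
rewrite big_ord_recr /= mulrDr.
have hN' : 0 < 1 - (c + N%:R) * s by move: hN; rewrite -natr1; nra.
have := IH hN'.
have hle : 1 - (c + N.+1%:R) * s <= 1 - (c + N%:R) * s by rewrite -natr1; nra.
have := @ln_trap (1 - (c + N%:R) * s) (1 - (c + N.+1%:R) * s) hN hle.
have -> : 1 - (c + N%:R) * s - (1 - (c + N.+1%:R) * s) = s by rewrite -natr1; ring.
move=> a b; lra.
Qed.
End S2.

Section S3.
Variable R : realType.

Lemma termA_eq (g x1 x2 : R) : 0 <= g -> 0 < x1 -> x1 < x2 -> x2 < 1 -> 0 < 1 - g * x2 ->
  (1 - x1) / (1 - x2) * (1 - g * x1)^-1 - (1 - g * x2)^-1
  = (x2 - x1) * (1 - g) / ((1 - x2) * (1 - g * x1) * (1 - g * x2)).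
Proof.
move=> g0 x10 x12 x21 h.
have h1 : 0 < 1 - g * x1 by nra.
field; nzs.
Qed.

Lemma termA_le (g x1 x2 : R) : 0 <= g -> g <= 1 -> 0 < x1 -> x1 < x2 -> x2 < 1 -> 0 < 1 - g * x2 ->
  (1 - g * x2)^-1 <= (1 - x1) / (1 - x2) * (1 - g * x1)^-1.
Proof.
move=> g0 g1 x10 x12 x21 h.
have h1 : 0 < 1 - g * x1 by nra.
rewrite -subr_ge0 termA_eq //; apply: divr_ge0; first nra.
apply: mulr_ge0; [apply: mulr_ge0|]; lra.
Qed.

Lemma termB_ge (g x1 x2 : R) : 1 <= g -> 0 < x1 -> x1 < x2 -> x2 < 1 -> 0 < 1 - g * x2 ->
  (1 - x1) / (1 - x2) * (1 - g * x1)^-1 <= (1 - g * x2)^-1.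
Proof.
move=> g1 x10 x12 x21 h.
have h1 : 0 < 1 - g * x1 by nra.
rewrite -subr_le0 termA_eq //; [|lra]; apply: mulr_le0_ge0; first nra.
rewrite invr_ge0; apply: mulr_ge0; [apply: mulr_ge0|]; lra.
Qed.

Variable n : nat.
Hypothesis hn : (2 <= n)%N.
Local Notation M := (n%:R - 1 : R).

Lemma M_ge1 : 1 <= M.
Proof. have : (2%:R : R) <= n%:R by rewrite ler_nat. lra. Qed.

Lemma M_gt0 : 0 < M.
Proof. have := M_ge1; lra. Qed.

Lemma natB_M (i : nat) : (i < n)%N -> (i%:R : R) <= M.
Proof.
move=> hi; have : (i.+1%:R : R) <= n%:R by rewrite ler_nat.
rewrite -natr1; lra.
Qed.

Lemma phi0 (j : nat) : (j <= n)%N -> phi n j (0 : R) = j%:R.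
Proof.
move=> hj; rewrite /phi.
under eq_bigr do rewrite mulr0 subr0 invr1.
under [X in _ - X]eq_bigr do rewrite mulr0 !subr0 invr1.
by rewrite !sumr_const !card_ord natrB // subKr.
Qed.

Lemma phi_SC (j : nat) (x1 x2 : R) : (j <= n - 1)%N -> 0 < x1 -> x1 < x2 ->
  x2 * (2 * M - j%:R) < M -> phi n j x1 <= 0 -> phi n j x2 < 0.
Proof.
move=> hj x10 x12 hb hphi.
have hJ : (j%:R : R) <= M.
  have : (j%:R : R) <= (n - 1)%:R by rewrite ler_nat.
  by rewrite natrB ?(leq_trans _ hn).
have HM := M_ge1.
have x21 : x2 < 1 by nra.
set rho := (1 - x1) / (1 - x2).
have rho1 : 1 < rho by rewrite /rho ltr_pdivlMr; lra.
have hA : \sum_(i < n) (1 - i%:R / M * x2)^-1 < rho * \sum_(i < n) (1 - i%:R / M * x1)^-1.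
  have n0 : (0 < n)%N by apply: ltnW.
  pose i0 : 'I_n := Ordinal n0.
  rewrite mulr_sumr (bigD1 i0) //= [X in _ < X](bigD1 i0) //= !mul0r !subr0 invr1 mulr1.
  apply: ltr_leD => //; apply: ler_sum => i _.
  have hiM := natB_M i (ltn_ord i).
  have M0 := M_gt0.
  have g0 : 0 <= i%:R / M by apply: divr_ge0 => //; lra.
  have g1 : i%:R / M <= 1 by rewrite ler_pdivrMr // mul1r.
  apply: termA_le => //.
  have : i%:R / M * x2 <= x2 by rewrite ler_piMl //; lra.
  lra.
have hB : rho * \sum_(i < n - j) (1 - x1 - i%:R / M * x1)^-1 <=
          \sum_(i < n - j) (1 - x2 - i%:R / M * x2)^-1.
  rewrite mulr_sumr; apply: ler_sum => i _.
  have hi : (i%:R : R) <= M - j%:R.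
    have : (i.+1 <= n - j)%N by [].
    rewrite -(ler_nat R) natrB; last by lia.
    rewrite -natr1; lra.
  have g0 : 0 <= i%:R / M by apply: divr_ge0 => //; lra.
  have gM : i%:R / M * M = i%:R by rewrite divfK //; apply/lt0r_neq0; lra.
  have ee : forall x : R, 1 - x - i%:R / M * x = 1 - (1 + i%:R / M) * x by move=> x; ring.
  rewrite !ee.
  apply: termB_ge => //; first lra.
  have : 0 < (1 - (1 + i%:R / M) * x2) * M.
    have -> : (1 - (1 + i%:R / M) * x2) * M = M - x2 * M - x2 * (i%:R / M * M) by ring.
    rewrite gM; nra.
  by rewrite pmulr_lgt0 //; lra.
have : rho * phi n j x1 <= 0 by rewrite pmulr_rle0 //; lra.
rewrite /phi mulrBr; lra.
Qed.
End S3.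

Section S4.
Variable R : realType.
Variable n : nat.
Hypothesis hn : (2 <= n)%N.
Local Notation M := (n%:R - 1 : R).

Lemma phi_j0_neg (x : R) : 0 < x -> x < 2^-1 -> phi n 0 x < 0.
Proof.
move=> x0 x2; rewrite /phi subn0 subr_lt0; apply: ltr_sum.
  by apply/hasP; exists (Ordinal (ltnW hn)); rewrite ?mem_index_enum.
move=> i _.
have hiM := @natB_M R n i (ltn_ord i).
have M0 := @M_gt0 R n hn.
have g0 : 0 <= i%:R / M by apply: divr_ge0 => //; lra.
have g1 : i%:R / M <= 1 by rewrite ler_pdivrMr // mul1r.
have h1 : i%:R / M * x <= x by rewrite ler_piMl //; lra.
rewrite ltf_pV2 ?posrE; lra.
Qed.

Lemma alg_ii (q s e : R) : 2^-1 <= q -> q <= 1 -> 0 < e -> e <= 2^-1 -> s = (1 - q) * e ->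
  s / 2 + (s / 2) / (q - s / 2) - s / 2 * (q^-1 + (q ^+ 2)^-1) <= 0.
Proof.
move=> q1 q2 e0 e1 se.
have s0 : 0 <= s by rewrite se; apply: mulr_ge0; lra.
have s1 : s <= 2^-1 * 2^-1 by rewrite se; nra.
have qs : 0 < q - s / 2 by lra.
have -> : s / 2 + (s / 2) / (q - s / 2) - s / 2 * (q^-1 + (q ^+ 2)^-1)
   = (s / 2) * ((1 - q) * (- q * (1 + q) + e / 2 * (1 + q - q ^+ 2))) / (q ^+ 2 * (q - s / 2)).
  rewrite se; field; nzs.
apply: mulr_le0_ge0; last by rewrite invr_ge0; apply: mulr_ge0 => //; [exact: sqr_ge0|lra].
apply: mulr_ge0_le0; first lra.
apply: mulr_ge0_le0; first lra.
nra.
Qed.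

End S4.

Section S5.
Variable R : realType.
Variable n : nat.
Hypothesis hn : (2 <= n)%N.
Local Notation M := (n%:R - 1 : R).

Lemma phi_lo (j : nat) : (1 <= j)%N -> (j <= n - 1)%N -> 0 <= phi n j ((j%:R - 1) / M :> R).
Proof.
move=> j1 jn.
have HM := @M_ge1 R n hn.
have [->|j2] : j = 1%N \/ (2 <= j)%N by lia.
  by rewrite subrr mul0r phi0 //; lia.
have J2 : (2 : R) <= j%:R by rewrite (ler_nat R 2 j).
have JM : (j%:R : R) <= M.
  have : (j%:R : R) <= (n - 1)%:R by rewrite ler_nat.
  by rewrite natrB //; lia.
set J := (j%:R : R) in J2 JM *.
set x := (J - 1) / M.
set s := x / M.
have M0 : M != 0 by apply/lt0r_neq0; lra.
have x0 : 0 < x by apply: divr_gt0; lra.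
have x1 : x < 1 by rewrite ltr_pdivrMr; lra.
have s0 : 0 < s by apply: divr_gt0; lra.
have Ms : M * s = x by rewrite /s mulrC divfK.
have xs : x * x = (J - 1) * s by rewrite /s /x; field.
have eA : \sum_(i < n) (1 - i%:R / M * x)^-1 = \sum_(i < n) (1 - (0 + i%:R) * s)^-1.
  by apply: eq_bigr => i _; rewrite /s; congr (_^-1); ring.
have eB : \sum_(i < n - j) (1 - x - i%:R / M * x)^-1 = \sum_(i < n - j) (1 - (M + i%:R) * s)^-1.
  apply: eq_bigr => i _; congr (_^-1).
  have -> : (M + i%:R) * s = M * s + i%:R * s by ring.
  by rewrite Ms /s; ring.
have enm1 : ((n - 1)%:R : R) = M by rewrite natrB //; lia.
have enj : ((n - j)%:R : R) = M + 1 - J by rewrite natrB; [rewrite /J; ring | lia].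
have TA := @sum_trap R s 0 (n - 1) s0.
rewrite subn1 prednK in TA; last by lia.
rewrite -subn1 enm1 !add0r mul0r subr0 invr1 ln1 Ms in TA.
have TA' := TA ltac:(lra).
have MB := @sum_mid R s M (n - j) s0.
have eY : 1 - (M + (n - j)%:R - 2^-1) * s = (1 - x) ^+ 2 + s / 2.
  rewrite enj.
  have -> : (M + (M + 1 - J) - 2^-1) * s = 2 * (M * s) - (J - 1) * s - s / 2 by field.
  rewrite Ms -xs; ring.
have eZ : 1 - (M - 2^-1) * s = 1 - x + s / 2.
  have -> : (M - 2^-1) * s = M * s - s / 2 by field.
  rewrite Ms; ring.
rewrite eY eZ in MB.
have Ypos : 0 < (1 - x) ^+ 2 + s / 2 by have := sqr_ge0 (1 - x); lra.
have MB' := MB Ypos.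
have hln : ln (1 - x) + ln (1 - x + s / 2) <= ln ((1 - x) ^+ 2 + s / 2).
  rewrite -lnM ?posrE; [|lra|lra].
  rewrite ler_ln ?posrE; [nra|nra|lra].
have hpos : 0 <= s / 2 * (1 + (1 - x)^-1).
  apply: mulr_ge0; first lra.
  have : 0 < (1 - x)^-1 by rewrite invr_gt0; lra.
  lra.
rewrite /phi eA eB.
rewrite -(pmulr_rge0 _ s0) mulrBr.
lra.
Qed.
End S5.

Section S6.
Variable R : realType.
Variable n : nat.
Hypothesis hn : (2 <= n)%N.
Local Notation M := (n%:R - 1 : R).

Lemma phi_hi (j : nat) : (1 <= j)%N -> (2 * j + 1 <= n)%N -> phi n j (j%:R / M :> R) <= 0.
Proof.
move=> j1 jn.
have HM := @M_ge1 R n hn.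
have J1 : (1 : R) <= j%:R by rewrite (ler_nat R 1 j).
have JM : 2 * (j%:R : R) <= M.
  have : ((2 * j)%:R : R) <= (n - 1)%:R by rewrite ler_nat; lia.
  by rewrite natrB ?natrM //; lia.
set J := (j%:R : R) in J1 JM *.
set x := J / M.
set s := x / M.
have M0 : M != 0 by apply/lt0r_neq0; lra.
have x0 : 0 < x by apply: divr_gt0; lra.
have x1 : x <= 2^-1 by rewrite ler_pdivrMr; lra.
have s0 : 0 < s by apply: divr_gt0; lra.
have Ms : M * s = x by rewrite /s mulrC divfK.
have xs : x * x = J * s by rewrite /s /x; field.
have eA : \sum_(i < n) (1 - i%:R / M * x)^-1 = \sum_(i < n) (1 - (0 + i%:R) * s)^-1.
  by apply: eq_bigr => i _; rewrite /s; congr (_^-1); ring.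
have eB : \sum_(i < n - j) (1 - x - i%:R / M * x)^-1 = \sum_(i < n - j) (1 - (M + i%:R) * s)^-1.
  apply: eq_bigr => i _; congr (_^-1).
  have -> : (M + i%:R) * s = M * s + i%:R * s by ring.
  by rewrite Ms /s; ring.
have en : (n%:R : R) = M + 1 by ring.
have enj : ((n - j - 1)%:R : R) = M - J by rewrite !natrB; [rewrite /J; ring | lia | lia].
have sle : s <= 2^-1 * 2^-1.
  have : s = x * M^-1 by [].
  have : M^-1 <= 2^-1 by rewrite lef_pV2 ?posrE; lra.
  have : 0 <= M^-1 by rewrite invr_ge0; lra.
  nra.
have MA := @sum_mid R s 0 n s0.
have eA1 : 1 - (0 + n%:R - 2^-1) * s = 1 - x - s / 2.
  rewrite en; have -> : (0 + (M + 1) - 2^-1) * s = M * s + s / 2 by field.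
  rewrite Ms; ring.
have eA2 : 1 - (0 - 2^-1) * s = 1 + s / 2 by field.
rewrite eA1 eA2 in MA.
have MA' := MA ltac:(lra).
have TB := @sum_trap R s M (n - j - 1) s0.
rewrite subn1 prednK in TB; last by lia.
rewrite -subn1 enj in TB.
have eB1 : 1 - (M + (M - J)) * s = (1 - x) ^+ 2.
  have -> : (M + (M - J)) * s = 2 * (M * s) - J * s by ring.
  rewrite Ms -xs; ring.
rewrite eB1 Ms in TB.
have q2pos : 0 < (1 - x) ^+ 2 by apply: exprn_gt0; lra.
have TB' := TB q2pos.
have l2 : ln ((1 - x) ^+ 2) = ln (1 - x) + ln (1 - x) by rewrite lnXn; [rewrite mulr2n | lra].
have la : ln (1 + s / 2) <= s / 2 by apply: le_ln1Dx; lra.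
have lb : ln (1 - x) - ln (1 - x - s / 2) <= (s / 2) / (1 - x - s / 2).
  rewrite -ln_div ?posrE; [|lra|lra].
  have -> : (1 - x) / (1 - x - s / 2) = 1 + (s / 2) / (1 - x - s / 2) by field; nzs.
  apply: le_ln1Dx.
  have : 0 <= (s / 2) / (1 - x - s / 2) by apply: divr_ge0; lra.
  lra.
have alg := @alg_ii R (1 - x) s M^-1 ltac:(lra) ltac:(lra) ltac:(rewrite invr_gt0; lra)
  ltac:(rewrite lef_pV2 ?posrE; lra) ltac:(rewrite /s; ring).
rewrite /phi eA eB.
rewrite -(pmulr_rle0 _ s0) mulrBr.
have e3 : s / 2 * ((1 - x)^-1 + ((1 - x) ^+ 2)^-1) = s / 2 * ((1 - x)^-1 + ((1 - x) ^+ 2)^-1) by [].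
lra.
Qed.

Lemma sum_pair (F : nat -> R) (J : nat) :
  \sum_(i < J + J) F i = \sum_(i < J) (F (i + i)%N + F (i + i).+1).
Proof.
elim: J => [|J IH]; first by rewrite !big_ord0.
rewrite addSn addnS !big_ord_recr /= IH; ring.
Qed.

Lemma phi_mid (j : nat) : n = (j + j)%N -> 0 <= phi n j (2^-1 : R).
Proof.
move=> enj.
have HM := @M_ge1 R n hn.
have M0 : 0 < M by lra.
have eM : M = 2 * j%:R - 1 by rewrite enj natrD; ring.
rewrite /phi subr_ge0.
have -> : (n - j)%N = j by lia.
pose F := fun k : nat => (1 - k%:R / M * 2^-1)^-1 : R.
have eS : \sum_(i < n) (1 - i%:R / M * 2^-1)^-1 = \sum_(i < j) (F (i + i)%N + F (i + i).+1).
  by rewrite -(sum_pair F) -enj.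
rewrite eS /F.
apply: ler_sum => i _.
have ij : ((i : nat) < j)%N := ltn_ord i.
have iJ : (i%:R : R) + 1 <= j%:R by rewrite natr1 ler_nat.
set u := 1 - i%:R / M.
have u0 : 0 < u.
  rewrite /u subr_gt0 ltr_pdivrMr // mul1r; lra.
have e1 : (1 - 2^-1 - i%:R / M * 2^-1)^-1 = 2 * u^-1 by rewrite /u; field; nzs.
have e2 : (1 - (i + i)%:R / M * 2^-1)^-1 = u^-1 by rewrite /u natrD; field; nzs.
set v := 1 - (i + i).+1%:R / M * 2^-1.
have v0 : 0 < v.
  rewrite /v -natr1 natrD subr_gt0.
  have -> : (i%:R + i%:R + 1) / M * 2^-1 = (i%:R + i%:R + 1) / (2 * M) by field; nzs.
  rewrite ltr_pdivrMr; lra.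
have vu : v <= u.
  rewrite /v /u -natr1 natrD.
  have -> : (i%:R + i%:R + 1) / M * 2^-1 = i%:R / M + (2 * M)^-1 by field; nzs.
  have : 0 <= (2 * M)^-1 by rewrite invr_ge0; lra.
  lra.
have : u^-1 <= v^-1 by rewrite lef_pV2 ?posrE.
rewrite e1 e2 -/v; lra.
Qed.
End S6.

Section S7.
Variable R : realType.

Lemma derivable_sumV (N : nat) (a b : nat -> R) (x : R) :
  (forall i, (i < N)%N -> a i + b i * x != 0) ->
  derivable (fun y => \sum_(i < N) (a i + b i * y)^-1) x 1.
Proof.
move=> h.
have -> : (fun y => \sum_(i < N) (a i + b i * y)^-1) = \sum_(i < N) (fun y => (a i + b i * y)^-1).
  by rewrite fct_sumE.
apply: derivable_sum => i.
apply: derivableV; first by apply: h.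
have hh := @is_derive_aff R (a i) (b i) x; exact: ex_derive.
Qed.

Variable n : nat.
Hypothesis hn : (2 <= n)%N.
Local Notation M := (n%:R - 1 : R).

Lemma phi_derivable (j : nat) (x : R) : (j <= n - 1)%N -> 0 <= x ->
  x * (2 * M - j%:R) < M -> derivable (phi n j) x 1.
Proof.
move=> hj x0 hb.
have HM := @M_ge1 R n hn.
have hJ : (j%:R : R) <= M.
  have : (j%:R : R) <= (n - 1)%:R by rewrite ler_nat.
  by rewrite natrB //; lia.
have x1 : x < 1 by nra.
have ephi : phi n j = (fun y => \sum_(i < n) (1 + (- (i%:R / M)) * y)^-1)
    - (fun y => \sum_(i < n - j) (1 + (- (1 + i%:R / M)) * y)^-1).
  apply/funext => y; rewrite /phi /=; congr (_ - _); apply: eq_bigr => i _; congr (_^-1); ring.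
rewrite ephi; apply: derivableB.
  apply: (@derivable_sumV n (fun _ => 1) (fun i => - (i%:R / M))) => i hi.
  have hiM := @natB_M R n i hi.
  have g1 : i%:R / M <= 1 by rewrite ler_pdivrMr ?mul1r //; lra.
  have g0 : 0 <= i%:R / M by apply: divr_ge0 => //; lra.
  nzs.
apply: (@derivable_sumV (n - j) (fun _ => 1) (fun i => - (1 + i%:R / M))) => i hi.
have hiJ : (i%:R : R) <= M - j%:R.
  have : (i.+1 <= n - j)%N by [].
  move: hi.
  rewrite -(ler_nat R) natrB; last by lia.
  rewrite -natr1; lra.
have g0 : 0 <= i%:R / M by apply: divr_ge0 => //; lra.
have gM : i%:R / M * M = i%:R by rewrite divfK //; apply/lt0r_neq0; lra.
have : 0 < (1 + - (1 + i%:R / M) * x) * M.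
  have -> : (1 + - (1 + i%:R / M) * x) * M = M - x * M - x * (i%:R / M * M) by ring.
  rewrite gM; nra.
rewrite pmulr_lgt0; last lra.
move=> hp; nzs.
Qed.

Lemma phi_bound_eq (j : nat) : phi_bound R n j = M / (2 * M - j%:R).
Proof. rewrite /phi_bound; congr (_ / _); ring. Qed.

End S7.

Section S8.
Variable R : realType.
Variable n : nat.
Hypothesis hn : (2 <= n)%N.
Local Notation M := (n%:R - 1 : R).

Lemma xnj_exists (j : nat) : (2 * j + 1 <= n)%N -> exists x : R, is_xnj n j x.
Proof.
move=> hj.
have HM := @M_ge1 R n hn.
have J0 : (0 : R) <= j%:R by [].
have JM : 2 * (j%:R : R) <= M.
  have : ((2 * j)%:R : R) <= (n - 1)%:R by rewrite ler_nat; lia.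
  by rewrite natrB ?natrM //; lia.
have hj1 : (j <= n - 1)%N by lia.
have [j0|j1] : j = 0%N \/ (1 <= j)%N by lia.
  subst j; exists 0; split.
  - apply/andP; split; last by rewrite mul0r.
    rewrite ler_pdivrMr; lra.
  - move=> y y0 y1; lra.
  - move=> y y0 y1; rewrite phi_bound_eq // => y2.
    apply: (@phi_j0_neg R n hn y) => //.
    have -> : (2^-1 : R) = M / (2 * M - 0%:R) by field; nzs.
    done.
have J1 : (1 : R) <= j%:R by rewrite (ler_nat R 1 j).
set J := (j%:R : R) in J0 JM J1 *.
set lo := (J - 1) / M.
set hi := J / M.
have lohi : lo <= hi by apply: ler_wpM2r; [rewrite invr_ge0; lra | lra].
have lo0 : 0 <= lo by apply: divr_ge0; lra.
have hib : hi * (2 * M - J) < M.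
  rewrite /hi mulrAC ltr_pdivrMr; last lra.
  nra.
have cont : {within `[lo, hi], continuous (phi n j)}.
  apply: derivable_within_continuous => z; rewrite in_itv /= => /andP[z1 z2].
  apply: (@phi_derivable R n hn j z hj1); first lra.
  have : z * (2 * M - J) <= hi * (2 * M - J) by apply: ler_wpM2r; lra.
  lra.
have plo := @phi_lo R n hn j j1 hj1.
have phi' := @phi_hi R n hn j j1 hj.
have [c cin pc] : exists2 c, c \in `[lo, hi]%R & phi n j c = 0.
  have mm : Num.min (phi n j lo) (phi n j hi) <= 0 <= Num.max (phi n j lo) (phi n j hi).
    by apply/andP; split; [rewrite ge_min | rewrite le_max]; apply/orP; [right|left].
  exact: (IVT lohi cont mm).
move: cin; rewrite in_itv /= => /andP[c1 c2].
have cb : c * (2 * M - J) < M.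
  have : c * (2 * M - J) <= hi * (2 * M - J) by apply: ler_wpM2r; lra.
  lra.
have ph0 : phi n j 0 = J by rewrite phi0 //; lia.
have c0 : 0 < c.
  have c0' : 0 <= c by lra.
  rewrite lt_neqAle c0' andbT; apply/eqP => c00; move: pc; rewrite -c00 ph0; lra.
exists c; split.
- by apply/andP; split; [exact: c1 | exact: c2].
- move=> y y0 yc; rewrite ltNge; apply/negP => hy.
  have [y00|y0'] : y = 0 \/ 0 < y by lra.
    by move: hy; rewrite y00 ph0; lra.
  have := @phi_SC R n hn j y c hj1 y0' yc cb hy; rewrite pc; lra.
- move=> y y0 cy; rewrite phi_bound_eq // => yb.
  have yb' : y * (2 * M - J) < M by rewrite -ltr_pdivlMr //; lra.
  apply: (@phi_SC R n hn j c y hj1 c0 cy yb'); rewrite pc.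
  done.
Qed.

Lemma xnj_spec (j : nat) : (2 * j + 1 <= n)%N -> is_xnj n j (xnj R n j).
Proof. by move=> hj; apply: xgetPex; apply: xnj_exists. Qed.

Lemma xnj_props (j : nat) : (2 * j + 1 <= n)%N ->
  [/\ 0 <= xnj R n j, xnj R n j <= 2^-1,
      (forall y, 0 < y -> y < xnj R n j -> 0 <= phi n j y) &
      (forall y, xnj R n j < y -> y < 2^-1 -> phi n j y <= 0)].
Proof.
move=> hj.
have HM := @M_ge1 R n hn.
have JM : 2 * (j%:R : R) <= M.
  have : ((2 * j)%:R : R) <= (n - 1)%:R by rewrite ler_nat; lia.
  by rewrite natrB ?natrM //; lia.
have J0 : (0 : R) <= j%:R by [].
have [h1 h3 h4] := xnj_spec j hj.
move/andP: h1 => [h1a h1b].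
have bnd : 2^-1 <= phi_bound R n j.
  rewrite phi_bound_eq // ler_pdivlMr; last lra.
  lra.
have ph0 : phi n j (0:R) = j%:R by rewrite phi0 //; lia.
have x0 : 0 <= xnj R n j.
  rewrite leNgt; apply/negP => hx.
  have := h4 0 (lexx _) hx; rewrite ph0.
  have : 0 < phi_bound R n j by lra.
  move=> p1 /(_ p1); lra.
split => //.
- apply: (le_trans h1b); rewrite ler_pdivrMr; lra.
- move=> y y0 yx; apply: ltW; apply: h3 => //; lra.
- move=> y xy y2; apply: ltW; apply: h4 => //; lra.
Qed.

Lemma phi_pos_half (j : nat) : (n <= 2 * j)%N -> (j <= n - 1)%N ->
  forall y : R, 0 < y -> y < 2^-1 -> 0 <= phi n j y.
Proof.
move=> h1 h2 y y0 y2.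
have HM := @M_ge1 R n hn.
have JM : (j%:R : R) <= M.
  have : (j%:R : R) <= (n - 1)%:R by rewrite ler_nat.
  by rewrite natrB //; lia.
have j1 : (1 <= j)%N by lia.
have J1 : (1 : R) <= j%:R by rewrite (ler_nat R 1 j).
have [z [z1 z2 z3]] : exists z : R, [/\ 2^-1 <= z, z * (2 * M - j%:R) < M & 0 <= phi n j z].
  have [e|lt] : n = (j + j)%N \/ (n + 1 <= 2 * j)%N by lia.
    exists 2^-1; split => //; first lra.
    exact: (@phi_mid R n hn j e).
  have J2 : M + 2 <= 2 * j%:R.
    have : ((n + 1)%:R : R) <= (2 * j)%:R by rewrite ler_nat.
    rewrite natrD natrM; lra.
  exists ((j%:R - 1) / M); split.
  - rewrite ler_pdivlMr; lra.
  - rewrite mulrAC ltr_pdivrMr; last lra.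
    nra.
  - exact: (@phi_lo R n hn j j1 h2).
rewrite leNgt; apply/negP => hy.
have := @phi_SC R n hn j y z h2 y0 ltac:(lra) z2 ltac:(lra).
lra.
Qed.

End S8.

Section S9.
Variable R : realType.

Definition Aprod (N : nat) (a b : nat -> R) (y : R) : R := \prod_(i < N) (a i + b i * y).

Lemma is_deriveM' (f g : R -> R) (x df dg : R) : is_derive x 1 f df -> is_derive x 1 g dg ->
  is_derive x 1 (fun y => f y * g y) (f x * dg + g x * df).
Proof. move=> h1 h2; exact: is_deriveM. Qed.
Arguments is_deriveM' [f g x df dg].

Lemma Aprod_recr N a b : Aprod N.+1 a b = (fun y => Aprod N a b y * (a N + b N * y)).
Proof. by apply/funext => y; rewrite /Aprod big_ord_recr. Qed.

Lemma Aprod_derivable N a b y : derivable (Aprod N a b) y 1.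
Proof.
elim: N => [|N IH].
  have -> : Aprod 0 a b = cst 1 by apply/funext => z; rewrite /Aprod big_ord0.
  exact: derivable_cst.
rewrite Aprod_recr.
have h2 := @is_derive_aff R (a N) (b N) y.
have h1 : is_derive y 1 (Aprod N a b) ('D_1 (Aprod N a b) y) by apply: derivableP.
have := is_deriveM' h1 h2; move=> h; exact: ex_derive.
Qed.

Lemma Aprod_is_derive N (a b : nat -> R) (y : R) : (forall i, (i < N)%N -> a i + b i * y != 0) ->
  is_derive y 1 (Aprod N a b) (Aprod N a b y * \sum_(i < N) b i / (a i + b i * y)).
Proof.
elim: N => [|N IH] hnz.
  have -> : Aprod 0 a b = cst 1 by apply/funext => z; rewrite /Aprod big_ord0.
  rewrite big_ord0 mulr0; exact: is_derive_cst.
rewrite Aprod_recr.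
have h2 := @is_derive_aff R (a N) (b N) y.
have h1 := IH (fun i hi => hnz i (ltnW hi)).
apply: (is_derive_eq (is_deriveM' h1 h2)).
rewrite big_ord_recr /=.
have hN := hnz N (ltnSn N).
field; exact: hN.
Qed.
End S9.

Section S10.
Variable R : realType.
Variable n : nat.
Hypothesis hn : (2 <= n)%N.
Local Notation M := (n%:R - 1 : R).

Definition A1 (k : nat) := @Aprod R k (fun _ => 0) (fun i => 1 - i%:R / M).
Definition A2 (k : nat) := @Aprod R (n - k) (fun _ => 1) (fun i => - (1 + i%:R / M)).
Definition A3 := @Aprod R n (fun _ => 1) (fun i => - (i%:R / M)).
Definition Pf (k : nat) (y : R) : R := 'C(n, k)%:R * A1 k y * A2 k y * (A3 y)^-1.

Lemma pnk_Pf (k : nat) (y : R) : 0 <= y -> y <= 2^-1 -> pnk n k y = Pf k y.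
Proof.
move=> y0 y1.
have my : Num.min y (1 - y) = y by rewrite min_l //; lra.
rewrite /pnk /Pf /cpol my /rising /A1 /A2 /A3 /Aprod.
have e1 : \prod_(i < k) (y + i%:R * (- y / M)) = \prod_(i < k) (0 + (1 - i%:R / M) * y).
  by apply: eq_bigr => i _; ring.
have e2 : \prod_(i < n - k) (1 - y + i%:R * (- y / M)) = \prod_(i < n - k) (1 + - (1 + i%:R / M) * y).
  by apply: eq_bigr => i _; ring.
have e3 : \prod_(i < n) (1 + i%:R * (- y / M)) = \prod_(i < n) (1 + - (i%:R / M) * y).
  by apply: eq_bigr => i _; ring.
by rewrite e1 e2 e3.
Qed.

Lemma fact3 (y : R) (i : nat) : 0 <= y -> y < 1 -> (i < n)%N -> 0 < 1 + - (i%:R / M) * y.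
Proof.
move=> y0 y1 hi.
have hiM := @natB_M R n i hi.
have M0 := @M_gt0 R n hn.
have g1 : i%:R / M <= 1 by rewrite ler_pdivrMr ?mul1r.
have g0 : 0 <= i%:R / M by apply: divr_ge0 => //; lra.
nra.
Qed.

Lemma fact2 (y : R) (i : nat) : 0 <= y -> y < 2^-1 -> (i < n)%N -> 0 < 1 + - (1 + i%:R / M) * y.
Proof.
move=> y0 y1 hi.
have hiM := @natB_M R n i hi.
have M0 := @M_gt0 R n hn.
have g1 : i%:R / M <= 1 by rewrite ler_pdivrMr ?mul1r.
have g0 : 0 <= i%:R / M by apply: divr_ge0 => //; lra.
nra.
Qed.

Lemma fact1 (i k : nat) : (k <= n - 1)%N -> (i < k)%N -> 0 < 1 - i%:R / M.
Proof.
move=> hk hi.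
have M0 := @M_gt0 R n hn.
have : (i.+1%:R : R) <= (n - 1)%:R by rewrite ler_nat; lia.
rewrite natrB; last lia.
rewrite -natr1 => h.
rewrite subr_gt0 ltr_pdivrMr // mul1r; lra.
Qed.

Lemma A3_pos (y : R) : 0 <= y -> y < 1 -> 0 < A3 y.
Proof.
move=> y0 y1; rewrite /A3 /Aprod; apply: prodr_gt0 => i _; exact: fact3.
Qed.

End S10.

Section S11.
Variable R : realType.
Variable n : nat.
Hypothesis hn : (2 <= n)%N.
Local Notation M := (n%:R - 1 : R).

Lemma S_ident (k : nat) (x : R) : (k <= n - 1)%N -> 0 < x -> x < 2^-1 ->
  x * (\sum_(i < k) (1 - i%:R / M) / (0 + (1 - i%:R / M) * x)
     + \sum_(i < n - k) (- (1 + i%:R / M)) / (1 + - (1 + i%:R / M) * x)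
     - \sum_(i < n) (- (i%:R / M)) / (1 + - (i%:R / M) * x)) = phi n k x.
Proof.
move=> hk x0 x1.
rewrite mulrBr mulrDr !mulr_sumr.
have e1 : \sum_(i < k) x * ((1 - i%:R / M) / (0 + (1 - i%:R / M) * x)) = \sum_(i < k) 1.
  apply: eq_bigr => i _.
  have := @fact1 R n hn i k hk (ltn_ord i); move=> h.
  have M0 := @M_gt0 R n hn.
  have : (i.+1%:R : R) <= (n - 1)%:R by rewrite ler_nat; have := ltn_ord i; lia.
  rewrite natrB; last lia.
  rewrite -natr1 => h2.
  field; nzs.
have e2 : \sum_(i < n - k) x * ((- (1 + i%:R / M)) / (1 + - (1 + i%:R / M) * x))
    = \sum_(i < n - k) (1 - (1 - x - i%:R / M * x)^-1).
  apply: eq_bigr => i _.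
  have hi : (i < n)%N by apply: (leq_trans (ltn_ord i)); exact: leq_subr.
  have := @fact2 R n hn x i (ltW x0) x1 hi; move=> h.
  have -> : 1 - x - i%:R / M * x = 1 + - (1 + i%:R / M) * x by ring.
  have M0 := @M_gt0 R n hn.
  have h2 : 0 < M + - (M + i%:R) * x.
    have -> : M + - (M + i%:R) * x = (1 + - (1 + i%:R / M) * x) * M by field; nzs.
    exact: mulr_gt0.
  field; nzs.
have e3 : \sum_(i < n) x * ((- (i%:R / M)) / (1 + - (i%:R / M) * x))
    = \sum_(i < n) (1 - (1 - i%:R / M * x)^-1).
  apply: eq_bigr => i _.
  have := @fact3 R n hn x i (ltW x0) ltac:(lra) (ltn_ord i); move=> h.
  have -> : 1 - i%:R / M * x = 1 + - (i%:R / M) * x by ring.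
  have M0 := @M_gt0 R n hn.
  have h2 : 0 < M + - i%:R * x.
    have -> : M + - i%:R * x = (1 + - (i%:R / M) * x) * M by field; nzs.
    exact: mulr_gt0.
  field; nzs.
rewrite e1 e2 e3 !sumrB !sumr_const !card_ord /phi natrB; last by lia.
ring.
Qed.

End S11.

Section S12.
Variable R : realType.
Variable n : nat.
Hypothesis hn : (2 <= n)%N.
Local Notation M := (n%:R - 1 : R).

Lemma Pf_is_derive (k : nat) (x : R) : (k <= n - 1)%N -> 0 < x -> x < 2^-1 ->
  is_derive x 1 (Pf R n k) (Pf R n k x * phi n k x / x).
Proof.
move=> hk x0 x1.
have hA1 := @Aprod_is_derive R k (fun _ => 0) (fun i => 1 - i%:R / M) x
  (fun i hi => ltac:(have := @fact1 R n hn i k hk hi; move=> h; nzs)).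
have hA2 := @Aprod_is_derive R (n - k) (fun _ => 1) (fun i => - (1 + i%:R / M)) x
  (fun i hi => ltac:(have := @fact2 R n hn x i (ltW x0) x1 (leq_trans hi (leq_subr k n)); move=> h; nzs)).
have hA3 := @Aprod_is_derive R n (fun _ => 1) (fun i => - (i%:R / M)) x
  (fun i hi => ltac:(have := @fact3 R n hn x i (ltW x0) ltac:(lra) hi; move=> h; nzs)).
have p3 := @A3_pos R n hn x (ltW x0) ltac:(lra).
have h3 := @is_deriveV' R _ _ _ (lt0r_neq0 p3) hA3.
have h1 := @is_deriveZ' R _ ('C(n, k)%:R) _ _ hA1.
have h := @is_deriveM' R _ _ _ _ _ (@is_deriveM' R _ _ _ _ _ h1 hA2) h3.
apply: (is_derive_eq h).
rewrite -(@S_ident R n hn k x hk x0 x1).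
rewrite /Pf /A1 /A2 /A3; rewrite /A3 in p3.
field; nzs.
Qed.
End S12.

Section S13.
Variable R : realType.
Variable n : nat.
Hypothesis hn : (2 <= n)%N.
Local Notation M := (n%:R - 1 : R).

Lemma Pf_derivable (k : nat) (y : R) : 0 <= y -> y <= 2^-1 -> derivable (Pf R n k) y 1.
Proof.
move=> y0 y1.
have hA1 := derivableP (@Aprod_derivable R k (fun _ => 0) (fun i => 1 - i%:R / M) y).
have hA2 := derivableP (@Aprod_derivable R (n - k) (fun _ => 1) (fun i => - (1 + i%:R / M)) y).
have hA3 := derivableP (@Aprod_derivable R n (fun _ => 1) (fun i => - (i%:R / M)) y).
have p3 := @A3_pos R n hn y y0 ltac:(lra).
rewrite /A3 in p3.
have h3 := @is_deriveV' R _ _ _ (lt0r_neq0 p3) hA3.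
have h1 := @is_deriveZ' R _ ('C(n, k)%:R) _ _ hA1.
have h := @is_deriveM' R _ _ _ _ _ (@is_deriveM' R _ _ _ _ _ h1 hA2) h3.
exact: ex_derive.
Qed.

Lemma Pf_nonneg (k : nat) (x : R) : (k <= n - 1)%N -> 0 < x -> x < 2^-1 -> 0 <= Pf R n k x.
Proof.
move=> hk x0 x1.
have p3 := @A3_pos R n hn x (ltW x0) ltac:(lra).
rewrite /Pf; apply: mulr_ge0; last by rewrite invr_ge0; apply: ltW.
apply: mulr_ge0; [apply: mulr_ge0 => //|].
  rewrite /A1 /Aprod; apply: prodr_ge0 => i _.
  have := @fact1 R n hn i k hk (ltn_ord i); move=> h.
  rewrite add0r; apply: mulr_ge0; lra.
rewrite /A2 /Aprod; apply: prodr_ge0 => i _.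
have hi : (i < n)%N by apply: (leq_trans (ltn_ord i)); exact: leq_subr.
have := @fact2 R n hn x i (ltW x0) x1 hi; lra.
Qed.

Lemma pnk_up (k : nat) (a b : R) : (k <= n - 1)%N -> 0 <= a -> b <= 2^-1 ->
  (forall y, a < y -> y < b -> 0 <= phi n k y) ->
  forall x y, a <= x -> x <= y -> y <= b -> pnk n k x <= pnk n k y.
Proof.
move=> hk a0 b1 hphi x y ax xy yb.
rewrite !(@pnk_Pf R n) //; try lra.
apply: (@up_of_deriv R (Pf R n k) (fun y => Pf R n k y * phi n k y / y) a b) => //.
- move=> z /andP[z1 z2]; apply: (@Pf_is_derive R n hn k z hk); lra.
- move=> z /andP[z1 z2]; apply: divr_ge0; last lra.
  apply: mulr_ge0; [apply: (@Pf_nonneg k z hk); lra | apply: hphi => //].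
- move=> z /andP[z1 z2]; apply: Pf_derivable; lra.
Qed.

Lemma pnk_down (k : nat) (a b : R) : (k <= n - 1)%N -> 0 <= a -> b <= 2^-1 ->
  (forall y, a < y -> y < b -> phi n k y <= 0) ->
  forall x y, a <= x -> x <= y -> y <= b -> pnk n k y <= pnk n k x.
Proof.
move=> hk a0 b1 hphi x y ax xy yb.
rewrite !(@pnk_Pf R n) //; try lra.
apply: (@down_of_deriv R (Pf R n k) (fun y => Pf R n k y * phi n k y / y) a b) => //.
- move=> z /andP[z1 z2]; apply: (@Pf_is_derive R n hn k z hk); lra.
- move=> z /andP[z1 z2].
  have hz : 0 < z^-1 by rewrite invr_gt0; lra.
  apply: mulr_le0_ge0; last lra.
  apply: mulr_ge0_le0; [apply: (@Pf_nonneg k z hk); lra | apply: hphi => //].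
- move=> z /andP[z1 z2]; apply: Pf_derivable; lra.
Qed.

Lemma pnk_sym (k : nat) (y : R) : (k <= n)%N -> pnk n k (1 - y) = pnk n (n - k) y.
Proof.
move=> hk.
have e : 1 - (1 - y) = y by ring.
have ec : cpol n (1 - y) = cpol n y by rewrite /cpol e minC.
rewrite /pnk ec e bin_sub // subKn //.
ring.
Qed.

Lemma pnk_nn_zero (y : R) : 0 <= y -> y <= 2^-1 -> pnk n n y = 0.
Proof.
move=> y0 y1.
rewrite (@pnk_Pf R n) // /Pf /A1 /Aprod.
have n0 : (n - 1 < n)%N by lia.
rewrite (bigD1 (Ordinal n0)) //= natrB; last lia.
have M0 := @M_gt0 R n hn.
rewrite divff; last by apply/lt0r_neq0.
by rewrite subrr mul0r add0r !mul0r !mulr0 !mul0r.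
Qed.
End S13.

Section S14.
Variable R : realType.
Variable n : nat.
Hypothesis hn : (2 <= n)%N.

Lemma incr_half (k : nat) : (n <= 2 * k)%N -> (k <= n)%N ->
  forall x y : R, 0 <= x -> x <= y -> y <= 2^-1 -> pnk n k x <= pnk n k y.
Proof.
move=> h1 h2 x y x0 xy y1.
have [->|hk] : k = n \/ (k <= n - 1)%N by lia.
  rewrite !(@pnk_nn_zero R n hn) //; lra.
apply: (@pnk_up R n hn k 0 2^-1 hk (lexx _) (lexx _)) => //.
move=> z z0 z1; exact: (@phi_pos_half R n hn k h1 hk z z0 z1).
Qed.

Lemma pnk_flip (k : nat) (z : R) : (k <= n)%N -> pnk n k z = pnk n (n - k) (1 - z).
Proof.
move=> hk; rewrite -(@pnk_sym R n k (1 - z) hk).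
by have -> : 1 - (1 - z) = z by ring.
Qed.

Lemma caseA (k : nat) : (2 * k + 1 <= n)%N ->
  (forall x y : R, 0 <= x -> x <= y -> y <= xnj R n k -> pnk n k x <= pnk n k y) /\
  (forall x y : R, xnj R n k <= x -> x <= y -> y <= 1 -> pnk n k y <= pnk n k x).
Proof.
move=> hk.
have hk1 : (k <= n - 1)%N by lia.
have [x00 x0h hpos hneg] := @xnj_props R n hn k hk.
split.
  move=> x y x0 xy yb.
  apply: (@pnk_up R n hn k 0 (xnj R n k) hk1 (lexx _) x0h) => //.
have D1 : forall x y : R, xnj R n k <= x -> x <= y -> y <= 2^-1 -> pnk n k y <= pnk n k x.
  move=> x y x0 xy yb.
  apply: (@pnk_down R n hn k (xnj R n k) 2^-1 hk1 x00 (lexx _)) => //.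
have D2 : forall x y : R, 2^-1 <= x -> x <= y -> y <= 1 -> pnk n k y <= pnk n k x.
  move=> x y x0 xy yb.
  rewrite !(@pnk_flip k) //; try lia.
  apply: (@incr_half (n - k)); try lia; lra.
move=> x y x0 xy y1.
have [y2|y2] := lerP y 2^-1; first exact: D1.
have [x2|x2] := lerP 2^-1 x; first exact: D2.
apply: (@le_trans _ _ (pnk n k (2^-1 : R))).
  apply: D2 => //; lra.
apply: D1 => //; lra.
Qed.

Lemma c1E (k : nat) : (k%:R <= (n%:R - 1) / 2 :> R) = (2 * k + 1 <= n)%N.
Proof.
rewrite ler_pdivlMr; last lra.
rewrite -(ler_nat R) natrD natrM.
by apply/idP/idP => h; lra.
Qed.

Lemma c2E (k : nat) : (k%:R < (n%:R + 1) / 2 :> R) = (2 * k < n + 1)%N.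
Proof.
rewrite ltr_pdivlMr; last lra.
rewrite -(ltr_nat R) natrD natrM.
by apply/idP/idP => h; lra.
Qed.

End S14.

Local Close Scope classical_set_scope.

Theorem theorem3p1 (R : realType) (n k : nat) (hn : (2 <= n)%N) (hk : (k <= n)%N) :
  (forall x y : R, 0 <= x -> x <= y -> y <= xstar R n k -> pnk n k x <= pnk n k y) /\
  (forall x y : R, xstar R n k <= x -> x <= y -> y <= 1 -> pnk n k y <= pnk n k x).
Proof.
rewrite /xstar c1E c2E.
have [h1|h1] := boolP (2 * k + 1 <= n)%N.
  exact: (@caseA R n hn k h1).
have [h2|h2] := boolP (2 * k < n + 1)%N.
  have e : n = (k + k)%N by lia.
  rewrite div1r.
  split.
    move=> x y x0 xy yb; apply: (@incr_half R n hn k) => //; try lia.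
  move=> x y x0 xy yb.
  rewrite !(@pnk_flip R n k) //.
  have -> : (n - k)%N = k by lia.
  apply: (@incr_half R n hn k); try lia; lra.
have hk' : (2 * (n - k) + 1 <= n)%N by lia.
have [I1 D1] := @caseA R n hn (n - k) hk'.
have ee : (n - (n - k))%N = k by lia.
split.
  move=> x y x0 xy yb.
  rewrite !(@pnk_flip R n k) //.
  apply: D1; lra.
move=> x y x0 xy yb.
rewrite !(@pnk_flip R n k) //.
apply: I1; lra.
Qed.
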